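(* Let $V\in\mathcal{R}$ be built from $v\in\mathcal{F}$, and let $(v_n)$ be any generating sequence of $V$ starting from $v_0=v$ (i.e. $v_{n+1}$ built from $v_n$ and $V$ extends every $v_n$). Then $L(v_n,v)=\dfrac{\rho_{v_n}-\rho_v}{1+\rho_{v_n}}$ for every $n\ge1$, the limit $L(V,v)=\lim_n L(v_n,v)$ exists and does not depend on the choice of $(v_n)$, and $$L(V,v)=\frac{\rho_V-\rho_v}{1+\rho_V}=1-\frac{1+\rho_v}{1+\rho_V}$$ when $V\in\mathcal{R}^*$, while $L(V,v)=1$ when $V\notin\mathcal{R}^*$. Moreover, if $V\in\mathcal{R}^*$ then $0<L(V,v)<1$, and for any generating sequence $(u_n)$ of $V$ the sequence $L(V,u_n)$ is nonincreasing with limit $0$.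
   Context: $\mathcal F$ = finite $\{0,1\}$-words starting and ending with $0$; $Y,Z$ count $1$s and $0$s, $\rho_\alpha=Y(\alpha)/Z(\alpha)$. $u$ built from $v$: $u=v1^{a_1}v\cdots v1^{a_{q-1}}v$ ($q\ge2$, $a_i\ge0$). Generating sequence (in general, starting from $v_0=0$): $v_{n+1}$ built from $v_n$. $\mathcal R$: aperiodic $V\in\{0,1\}^{\mathbb N}$ extending all $v_n$ of some generating sequence. $V$ built from $v$: $V=v1^{a_1}v1^{a_2}v\cdots$ with $a_i\ge0$. For $V\in\mathcal R$, $\rho_V=\lim_n\rho_{v_n}\in[0,\infty]$ for any generating sequence $(v_n)$ of $V$ (this limit is independent of the sequence), and $\mathcal R^*=\{V\in\mathcal R:\rho_V<\infty\}$. For $\alpha,\beta\in\mathcal F$ with $\alpha=\beta1^{a_1}\beta\cdots\beta1^{a_{q-1}}\beta$, $L(\alpha,\beta)=\frac{1}{\mathrm{lh}(\alpha)}\sum_{j=1}^{q-1}a_j$. *)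

(* Defs.v *)
From Stdlib Require Import Reals Lra Lia Arith List ClassicalEpsilon.
Import ListNotations.
Open Scope R_scope.

(* Finite {0,1}-words: lists of bool, with false = 0 and true = 1. *)
Definition word := list bool.

Definition inF (w : word) : Prop :=
  w <> [] /\ hd true w = false /\ last w true = false.

Definition Y (w : word) : nat := count_occ Bool.bool_dec w true.
Definition Z (w : word) : nat := count_occ Bool.bool_dec w false.
Definition rho (w : word) : R := INR (Y w) / INR (Z w).

(* u = v 1^{a_1} v ... v 1^{a_{q-1}} v with a = [a_1;...;a_{q-1}] *)
Definition concat_blocks (v : word) (a : list nat) : word :=
  v ++ flat_map (fun k => repeat true k ++ v) a.

(* u built from v (q >= 2, i.e. at least one gap) *)
Definition built (u v : word) : Prop :=
  exists a : list nat, (1 <= length a)%nat /\ u = concat_blocks v a.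

(* L(alpha, beta) = (sum_j a_j) / lh(alpha), where alpha = beta 1^{a_1} beta ... beta.
   The exponent list is chosen by (classical) description; it is unique
   whenever alpha is built from beta. *)
Definition L (alpha beta : word) : R :=
  INR (list_sum (epsilon (inhabits (@nil nat))
                   (fun a => alpha = concat_blocks beta a)))
  / INR (length alpha).

Definition extends (V : nat -> bool) (w : word) : Prop :=
  forall i, (i < length w)%nat -> V i = nth i w false.

Definition gen_seq (w0 : word) (V : nat -> bool) (ws : nat -> word) : Prop :=
  ws 0%nat = w0 /\ (forall n, built (ws (S n)) (ws n)) /\ (forall n, extends V (ws n)).

Definition aperiodic (V : nat -> bool) : Prop :=
  ~ (exists p N : nat, (0 < p)%nat /\ forall n, (N <= n)%nat -> V (n + p)%nat = V n).

Definition inR (V : nat -> bool) : Prop :=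
  aperiodic V /\ exists ws, gen_seq [false] V ws.

(* Start positions of the blocks in V = v 1^{a_0} v 1^{a_1} v ... *)
Fixpoint block_pos (len : nat) (a : nat -> nat) (k : nat) : nat :=
  match k with
  | O => O
  | S k' => (block_pos len a k' + len + a k')%nat
  end.

(* V built from v : V = v 1^{a_1} v 1^{a_2} v ... *)
Definition V_built (V : nat -> bool) (v : word) : Prop :=
  exists a : nat -> nat, forall k,
    (forall i, (i < length v)%nat -> V (block_pos (length v) a k + i)%nat = nth i v false) /\
    (forall j, (j < a k)%nat -> V (block_pos (length v) a k + length v + j)%nat = true).

(* Extended nonnegative reals [0, +oo] for rho_V *)
Inductive ER := Fin (r : R) | PInf.

Definition tends (u : nat -> R) (x : ER) : Prop :=
  match x with
  | Fin r => Un_cv u r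
  | PInf => cv_infty u
  end.

Definition rhoV_is (V : nat -> bool) (x : ER) : Prop :=
  forall ws, gen_seq [false] V ws -> tends (fun n => rho (ws n)) x.

Definition inRstar (V : nat -> bool) : Prop :=
  inR V /\ exists r : R, rhoV_is V (Fin r).

Definition LV_is (V : nat -> bool) (u : word) (l : R) : Prop :=
  (exists ws, gen_seq u V ws) /\
  (forall ws, gen_seq u V ws -> Un_cv (fun n => L (ws n) u) l).

(* Main.v *)
Require Import Defs.
From Stdlib Require Import Reals List.
Import ListNotations.
Open Scope R_scope.
From Stdlib Require Import Lra Lia Arith ClassicalEpsilon Classical.
Import Defs.


Lemma YZ_len w : (Y w + Z w)%nat = length w.
Proof.
  induction w as [|b w IH]; unfold Y, Z in *; simpl; auto.
  destruct b; simpl; lia.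
Qed.

Lemma Y_app a b : Y (a ++ b) = (Y a + Y b)%nat.
Proof. unfold Y; apply count_occ_app. Qed.
Lemma Z_app a b : Z (a ++ b) = (Z a + Z b)%nat.
Proof. unfold Z; apply count_occ_app. Qed.
Lemma Y_rep k : Y (repeat true k) = k.
Proof. unfold Y; apply count_occ_repeat_eq; auto. Qed.
Lemma Z_rep k : Z (repeat true k) = 0%nat.
Proof. unfold Z; apply count_occ_repeat_neq; discriminate. Qed.

Lemma cb_nil w : concat_blocks w [] = w.
Proof. unfold concat_blocks; simpl; rewrite app_nil_r; auto. Qed.

Lemma cb_cons w k b : concat_blocks w (k :: b) = w ++ repeat true k ++ concat_blocks w b.
Proof. unfold concat_blocks; simpl; rewrite !app_assoc; auto. Qed.

Lemma cb_app v a k c : concat_blocks v (a ++ k :: c) =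
  concat_blocks v a ++ repeat true k ++ concat_blocks v c.
Proof.
  induction a as [|x a IH]; simpl.
  - rewrite cb_cons, cb_nil; auto.
  - rewrite !cb_cons, IH, !app_assoc; auto.
Qed.

Lemma cb_trans v a b : concat_blocks (concat_blocks v a) b =
  concat_blocks v (a ++ flat_map (fun k => k :: a) b).
Proof.
  induction b as [|k b IH]; simpl.
  - rewrite cb_nil, app_nil_r; auto.
  - rewrite cb_cons, IH, cb_app; auto.
Qed.

Lemma Z_cb v a : Z (concat_blocks v a) = ((length a + 1) * Z v)%nat.
Proof.
  induction a as [|k a IH]; simpl.
  - rewrite cb_nil; lia.
  - rewrite cb_cons, !Z_app, Z_rep, IH; lia.
Qed.

Lemma Y_cb v a : Y (concat_blocks v a) = ((length a + 1) * Y v + list_sum a)%nat.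
Proof.
  induction a as [|k a IH]; simpl.
  - rewrite cb_nil; lia.
  - rewrite cb_cons, !Y_app, Y_rep, IH; lia.
Qed.

Lemma len_cb v a : length (concat_blocks v a) = ((length a + 1) * length v + list_sum a)%nat.
Proof. rewrite <- !YZ_len, Y_cb, Z_cb; lia. Qed.

Lemma L_formula alpha beta a0 : alpha = concat_blocks beta a0 -> (0 < Z beta)%nat ->
  L alpha beta = (rho alpha - rho beta) / (1 + rho alpha).
Proof.
  intros H0 HZ.
  unfold L.
  set (a := epsilon _ _).
  assert (Ha : alpha = concat_blocks beta a).
  { apply (epsilon_spec (inhabits (@nil nat)) (fun a => alpha = concat_blocks beta a)).
    eauto. }
  unfold rho.
  rewrite <- (YZ_len alpha).
  rewrite Ha, Y_cb, Z_cb.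
  assert (HZr : 0 < INR (Z beta)) by (apply lt_0_INR; lia).
  assert (0 <= INR (Y beta)) by apply pos_INR.
  assert (0 <= INR (list_sum a)) by apply pos_INR.
  assert (0 <= INR (length a)) by apply pos_INR.
  rewrite !plus_INR, !mult_INR, !plus_INR. simpl INR.
  field.
  split; [lra|]. split; [lra|].
  nra.
Qed.


Lemma Y_firstn_le n w : (Y (firstn n w) <= Y w)%nat.
Proof. rewrite <- (firstn_skipn n w) at 2. rewrite Y_app. lia. Qed.
Lemma Z_firstn_le n w : (Z (firstn n w) <= Z w)%nat.
Proof. rewrite <- (firstn_skipn n w) at 2. rewrite Z_app. lia. Qed.

Lemma K u c n : exists j, (Z (firstn n (concat_blocks u c)) <= (j+1) * Z u)%nat /\
  (j * Y u <= Y (firstn n (concat_blocks u c)))%nat.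
Proof.
  revert n; induction c as [|k c IH]; intro n.
  - exists 0%nat. rewrite cb_nil. pose proof (Z_firstn_le n u). lia.
  - rewrite cb_cons, app_assoc, firstn_app.
    destruct (Nat.le_gt_cases n (length (u ++ repeat true k))) as [Hn|Hn].
    + exists 0%nat. replace (n - length (u ++ repeat true k))%nat with 0%nat by lia.
      simpl. rewrite app_nil_r.
      pose proof (Z_firstn_le n (u ++ repeat true k)). rewrite Z_app, Z_rep in H. lia.
    + rewrite firstn_all2 by lia.
      destruct (IH (n - length (u ++ repeat true k))%nat) as [j [H1 H2]].
      exists (S j). rewrite Y_app, Z_app, Y_app, Z_app, Y_rep, Z_rep. nia.
Qed.

Lemma K2 u c n (J : nat) : (1 <= J)%nat ->
  (J * length u <= length (firstn n (concat_blocks u c)))%nat ->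
  ((J - 1) * Y u * Z (firstn n (concat_blocks u c)) <=
   J * Y (firstn n (concat_blocks u c)) * Z u)%nat.
Proof.
  intros HJ HL.
  set (P := firstn n (concat_blocks u c)) in *.
  destruct (K u c n) as [j [H1 H2]]. fold P in H1, H2.
  rewrite <- (YZ_len P), <- (YZ_len u) in HL.
  destruct (Nat.le_gt_cases J (j+1)) as [Hj|Hj].
  - apply Nat.le_trans with ((J-1) * Y u * ((j+1) * Z u))%nat.
    + apply Nat.mul_le_mono_l; auto.
    + apply Nat.le_trans with (J * (j * Y u) * Z u)%nat; [|apply Nat.mul_le_mono_r, Nat.mul_le_mono_l; auto].
      replace ((J - 1) * Y u * ((j + 1) * Z u))%nat with (((J-1)*(j+1)) * (Y u * Z u))%nat by (rewrite !Nat.mul_assoc; ring_simplify; lia).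
      replace (J * (j * Y u) * Z u)%nat with ((J*j) * (Y u * Z u))%nat by ring.
      apply Nat.mul_le_mono_r. nia.
  - assert (HZ : (Z P <= (J-1) * Z u)%nat) by nia.
    assert (HY : (J * Y u + J * Z u - Z P <= Y P)%nat) by lia.
    apply Nat.le_trans with ((J - 1) * Y u * ((J-1) * Z u))%nat.
    + apply Nat.mul_le_mono_l; auto.
    + apply Nat.le_trans with (J * (J * Y u) * Z u)%nat; [|apply Nat.mul_le_mono_r, Nat.mul_le_mono_l; lia].
      replace ((J - 1) * Y u * ((J-1) * Z u))%nat with (((J-1)*(J-1)) * (Y u * Z u))%nat by (rewrite !Nat.mul_assoc; ring_simplify; lia).
      replace (J * (J * Y u) * Z u)%nat with ((J*J) * (Y u * Z u))%nat by ring.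
      apply Nat.mul_le_mono_r. nia.
Qed.


Lemma seq_cb (V : nat -> bool) w0 ws : gen_seq w0 V ws -> forall n, exists a, ws n = concat_blocks w0 a.
Proof.
  intros [H0 [Hb _]] n; induction n as [|n [a IH]].
  - exists []. rewrite cb_nil; auto.
  - destruct (Hb n) as [b [_ Hb']]. rewrite Hb', IH, cb_trans. eauto.
Qed.

Lemma seq_Z (V : nat -> bool) w0 ws : gen_seq w0 V ws -> (0 < Z w0)%nat -> forall n, (0 < Z (ws n))%nat.
Proof. intros H HZ n. destruct (seq_cb V _ _ H n) as [a ->]. rewrite Z_cb. lia. Qed.

Lemma seq_len (V : nat -> bool) w0 ws : gen_seq w0 V ws -> (0 < Z w0)%nat -> forall n, (n < length (ws n))%nat.
Proof.
  intros H HZ n. pose proof (seq_Z V _ _ H HZ) as HZn.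
  destruct H as [H0 [Hb _]].
  induction n as [|n IH].
  - specialize (HZn 0%nat). rewrite <- YZ_len. lia.
  - destruct (Hb n) as [b [Hl ->]]. rewrite len_cb. nia.
Qed.

Lemma rho_mono (V : nat -> bool) w0 ws : gen_seq w0 V ws -> (0 < Z w0)%nat -> forall n, rho (ws n) <= rho (ws (S n)).
Proof.
  intros H HZ n. pose proof (seq_Z V _ _ H HZ n) as HZn.
  destruct H as [H0 [Hb _]].
  destruct (Hb n) as [b [Hl ->]]. unfold rho. rewrite Y_cb, Z_cb.
  set (w := ws n) in *.
  assert (HZr : 0 < INR (Z w)) by (apply lt_0_INR; lia).
  assert (0 <= INR (Y w)) by apply pos_INR.
  assert (0 <= INR (list_sum b)) by apply pos_INR.
  assert (0 <= INR (length b)) by apply pos_INR.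
  rewrite !plus_INR, !mult_INR, !plus_INR. simpl INR.
  replace (((INR (length b) + 1) * INR (Y w) + INR (list_sum b)) / ((INR (length b) + 1) * INR (Z w)))
    with (INR (Y w) / INR (Z w) + INR (list_sum b) / ((INR (length b) + 1) * INR (Z w))) by (field; lra).
  assert (0 <= INR (list_sum b) / ((INR (length b) + 1) * INR (Z w))) by (apply Rle_mult_inv_pos; nra).
  lra.
Qed.

Lemma rho_mono_le (V : nat -> bool) w0 ws : gen_seq w0 V ws -> (0 < Z w0)%nat -> forall n m, (n <= m)%nat -> rho (ws n) <= rho (ws m).
Proof.
  intros H HZ n m Hnm. induction Hnm; [lra|].
  eapply Rle_trans; [apply IHHnm|apply (rho_mono V _ _ H HZ)].
Qed.

Lemma gseq_shift (V : nat -> bool) w0 ws m : gen_seq w0 V ws -> gen_seq (ws m) V (fun k => ws (m + k)%nat).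
Proof.
  intros [H0 [Hb He]]. split; [f_equal; lia|]. split.
  - intro n. replace (m + S n)%nat with (S (m+n)) by lia. apply Hb.
  - intro n. apply He.
Qed.

Lemma prefix_ext (V : nat -> bool) w1 w2 : extends V w1 -> extends V w2 -> (length w1 <= length w2)%nat ->
  w1 = firstn (length w1) w2.
Proof.
  intros H1 H2 Hl. apply nth_ext with false false.
  - rewrite length_firstn. lia.
  - intros i Hi. rewrite nth_firstn. destruct (Nat.ltb_spec i (length w1)); [|lia].
    rewrite <- H1, <- H2 by lia. auto.
Qed.

Lemma rho_nonneg w : 0 <= rho w.
Proof. unfold rho. destruct (Nat.eq_dec (Z w) 0) as [e|n].
  - rewrite e. simpl. unfold Rdiv. rewrite Rinv_0. lra.
  - apply Rle_mult_inv_pos; [apply pos_INR| apply lt_0_INR; lia]. Qed.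

Lemma indep (V : nat -> bool) w0 ws u0 us : gen_seq w0 V ws -> (0 < Z w0)%nat ->
  gen_seq u0 V us -> (0 < Z u0)%nat ->
  forall m (J : nat), (1 <= J)%nat -> exists N, forall n, (N <= n)%nat ->
   (INR J - 1) / INR J * rho (us m) <= rho (ws n).
Proof.
  intros Hw Hw0 Hu Hu0 m J HJ.
  exists (J * length (us m))%nat. intros n Hn.
  pose proof (seq_len V _ _ Hw Hw0 n) as Hln.
  set (m' := (m + length (ws n))%nat).
  pose proof (seq_len V _ _ Hu Hu0 m') as Hlm.
  pose proof (gseq_shift V _ _ m Hu) as Hsh.
  destruct (seq_cb V _ _ Hsh (length (ws n))) as [c Hc]. simpl in Hc.
  assert (Hp : ws n = firstn (length (ws n)) (us m')).
  { apply (prefix_ext V); [apply Hw| apply Hu| lia]. }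
  unfold m' in Hp. rewrite Hc in Hp.
  pose proof (K2 (us m) c (length (ws n)) J HJ) as HK.
  rewrite <- Hp in HK. assert (HJl : (J * length (us m) <= length (ws n))%nat) by lia. specialize (HK HJl).
  pose proof (seq_Z V _ _ Hu Hu0 m) as HZu. pose proof (seq_Z V _ _ Hw Hw0 n) as HZw.
  set (P := ws n) in *. set (u := us m) in *.
  apply (le_INR) in HK. rewrite !mult_INR, minus_INR in HK by lia. simpl in HK.
  unfold rho.
  assert (0 < INR (Z P)) by (apply lt_0_INR; lia).
  assert (0 < INR (Z u)) by (apply lt_0_INR; lia).
  assert (1 <= INR J) by (apply (le_INR 1); lia).
  assert (0 <= INR (Y u)) by apply pos_INR.
  apply Rmult_le_reg_r with (INR J * INR (Z P) * INR (Z u)); [repeat apply Rmult_lt_0_compat; lra|].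
  replace ((INR J - 1) / INR J * (INR (Y u) / INR (Z u)) * (INR J * INR (Z P) * INR (Z u)))
    with ((INR J - 1) * INR (Y u) * INR (Z P)) by (field; lra).
  replace (INR (Y P) / INR (Z P) * (INR J * INR (Z P) * INR (Z u)))
    with (INR J * INR (Y P) * INR (Z u)) by (field; lra).
  exact HK.
Qed.



Lemma mono_le_lim u r : (forall n, u n <= u (S n)) -> Un_cv u r -> forall n, u n <= r.
Proof.
  intros Hm Hc n. destruct (Rle_or_lt (u n) r) as [h|h]; auto. exfalso.
  destruct (Hc (u n - r)) as [N HN]; [lra|].
  specialize (HN (max N n) ltac:(lia)).
  assert (u n <= u (max N n)).
  { assert (Hle : (n <= max N n)%nat) by lia. revert Hle. generalize (max N n). intros m Hle.
    induction Hle as [|m Hle IH]; [lra|]. eapply Rle_trans; [exact IH|apply Hm]. }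
  unfold Rdist in HN. rewrite Rabs_right in HN by lra. lra.
Qed.

Lemma pick_J x d : 0 <= x -> 0 < d -> exists J : nat, (1 <= J)%nat /\ x / INR J < d.
Proof.
  intros hx hd. destruct (INR_archimed d x hd) as [n Hn].
  exists (S n). split; [lia|]. rewrite S_INR.
  assert (0 <= INR n) by apply pos_INR.
  apply Rmult_lt_reg_r with (INR n + 1); [lra|].
  unfold Rdiv. rewrite Rmult_assoc, Rinv_l by lra. nra.
Qed.

Lemma frac_eq (J : nat) x : (1 <= J)%nat -> (INR J - 1) / INR J * x = x - x / INR J.
Proof. intro. assert (1 <= INR J) by (apply (le_INR 1); lia). field. lra. Qed.


Lemma same_lim (V : nat -> bool) w0 ws u0 us r : gen_seq w0 V ws -> (0 < Z w0)%nat ->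
  gen_seq u0 V us -> (0 < Z u0)%nat -> Un_cv (fun n => rho (us n)) r ->
  Un_cv (fun n => rho (ws n)) r.
Proof.
  intros Hw Hw0 Hu Hu0 Hc.
  assert (Hub : forall n, rho (us n) <= r) by (apply mono_le_lim; auto; apply (rho_mono V u0 us); auto).
  assert (Hwb : forall n, rho (ws n) <= r).
  { intro n. destruct (Rle_or_lt (rho (ws n)) r) as [h|h]; auto. exfalso.
    destruct (pick_J (rho (ws n)) (rho (ws n) - r)) as [J [HJ HJx]]; [apply rho_nonneg|lra|].
    destruct (indep V u0 us w0 ws Hu Hu0 Hw Hw0 n J HJ) as [N HN].
    specialize (HN N (le_n _)). specialize (Hub N). rewrite frac_eq in HN by auto. lra. }
  intros eps Heps.
  destruct (Hc (eps/2)) as [m Hm]; [lra|]. specialize (Hm m (le_n _)). simpl in Hm.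
  unfold Rdist in Hm. rewrite Rabs_left1 in Hm by (specialize (Hub m); lra).
  destruct (pick_J (rho (us m)) (eps/2)) as [J [HJ HJx]]; [apply rho_nonneg|lra|].
  destruct (indep V w0 ws u0 us Hw Hw0 Hu Hu0 m J HJ) as [N HN].
  exists N. intros n Hn. specialize (HN n Hn). rewrite frac_eq in HN by auto.
  unfold Rdist. rewrite Rabs_left1 by (specialize (Hwb n); lra). lra.
Qed.

Lemma periodic_cb v a i : list_sum a = 0%nat -> (i + length v < length (concat_blocks v a))%nat ->
  nth (i + length v) (concat_blocks v a) false = nth i (concat_blocks v a) false.
Proof.
  revert i; induction a as [|k a IH]; intros i Hs Hl.
  - rewrite cb_nil in Hl. lia.
  - simpl in Hs. assert (k = 0%nat) by lia. subst k.
    rewrite cb_cons. simpl. rewrite cb_cons in Hl. simpl in Hl. rewrite length_app in Hl.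
    destruct (Nat.lt_ge_cases i (length v)) as [Hi|Hi].
    + rewrite (app_nth1 v _ false Hi). rewrite (app_nth2 v _ false (n := (i + length v)%nat)) by lia.
      replace (i + length v - length v)%nat with i by lia.
      unfold concat_blocks. rewrite app_nth1 by auto. auto.
    + rewrite (app_nth2 v _ false (n := (i + length v)%nat)) by lia.
      rewrite (app_nth2 v _ false (n := i)) by lia.
      replace (i + length v - length v)%nat with (i - length v + length v)%nat by lia.
      apply IH; lia.
Qed.

Lemma strict_incr (V : nat -> bool) v vs : gen_seq v V vs -> (0 < Z v)%nat -> aperiodic V ->
  exists n, rho v < rho (vs n).
Proof.
  intros Hvs Hz Hap. apply NNPP. intro Hn.
  apply Hap. exists (length v), 0%nat. split.
  { rewrite <- YZ_len. lia. }
  intros n _.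
  set (k := (n + length v)%nat).
  pose proof (seq_len V v vs Hvs Hz k) as Hl.
  destruct (seq_cb V v vs Hvs k) as [a Ha].
  assert (Hs : list_sum a = 0%nat).
  { assert (Hle : rho (vs k) <= rho v) by (apply Rnot_lt_le; intro; apply Hn; eauto).
    rewrite Ha in Hle. unfold rho in Hle. rewrite Y_cb, Z_cb in Hle.
    assert (HZr : 0 < INR (Z v)) by (apply lt_0_INR; lia).
    assert (0 <= INR (Y v)) by apply pos_INR.
    assert (0 <= INR (list_sum a)) by apply pos_INR.
    assert (0 <= INR (length a)) by apply pos_INR.
    rewrite !plus_INR, !mult_INR, !plus_INR in Hle. simpl INR in Hle.
    replace (((INR (length a) + 1) * INR (Y v) + INR (list_sum a)) / ((INR (length a) + 1) * INR (Z v)))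
      with (INR (Y v) / INR (Z v) + INR (list_sum a) / ((INR (length a) + 1) * INR (Z v))) in Hle by (field; lra).
    assert (INR (list_sum a) / ((INR (length a) + 1) * INR (Z v)) <= 0) by lra.
    destruct (list_sum a) eqn:E; auto. exfalso.
    assert (0 < INR (S n0)) by (apply lt_0_INR; lia).
    assert (0 < INR (S n0) / ((INR (length a) + 1) * INR (Z v))) by (apply Rdiv_lt_0_compat; nra).
    lra. }
  destruct Hvs as [_ [_ He]].
  rewrite !(He k) by lia. rewrite Ha in *. fold k. apply periodic_cb; auto.
Qed.


Lemma Lconv x r c : (forall n, 0 <= x n) -> 0 <= r -> 0 <= c -> Un_cv x r ->
  Un_cv (fun n => (x n - c) / (1 + x n)) ((r - c) / (1 + r)).
Proof.
  intros Hx Hr Hc Hcv eps Heps.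
  destruct (Hcv (eps / (1 + c))) as [N HN]; [apply Rdiv_lt_0_compat; lra|].
  exists N. intros n Hn. specialize (HN n Hn). specialize (Hx n). unfold Rdist in *.
  replace ((x n - c) / (1 + x n) - (r - c) / (1 + r)) with ((1 + c) * ((x n - r) / ((1 + x n) * (1 + r)))) by (field; lra).
  rewrite Rabs_mult, Rabs_right by lra.
  unfold Rdiv. rewrite Rabs_mult, Rabs_inv, (Rabs_right ((1 + x n) * (1 + r))) by nra.
  assert (Hd : eps / (1 + c) * (1 + c) = eps) by (field; lra).
  assert (Hi : / ((1 + x n) * (1 + r)) <= 1).
  { rewrite <- Rinv_1. apply Rinv_le_contravar; [lra|nra]. }
  assert (0 < / ((1 + x n) * (1 + r))) by (apply Rinv_0_lt_compat; nra).
  assert (Rabs (x n - r) * / ((1 + x n) * (1 + r)) < eps / (1+c)).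
  { pose proof (Rabs_pos (x n - r)). nra. }
  rewrite <- Hd, Rmult_comm. apply Rmult_lt_compat_r; [lra|]. exact H0.
Qed.

Lemma Linf x c : (forall n, 0 <= x n) -> 0 <= c -> cv_infty x ->
  Un_cv (fun n => (x n - c) / (1 + x n)) 1.
Proof.
  intros Hx Hc Hcv eps Heps.
  destruct (Hcv ((1 + c) / eps)) as [N HN].
  exists N. intros n Hn. specialize (HN n Hn). specialize (Hx n). unfold Rdist.
  replace ((x n - c) / (1 + x n) - 1) with (- ((1 + c) / (1 + x n))) by (field; lra).
  rewrite Rabs_Ropp, Rabs_right by (apply Rle_ge, Rle_mult_inv_pos; lra).
  assert (1 + c < eps * (1 + x n)).
  { apply Rmult_lt_compat_l with (r := eps) in HN; auto.
    replace (eps * ((1 + c) / eps)) with (1 + c) in HN by (field; lra). nra. }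
  apply Rmult_lt_reg_r with (1 + x n); [lra|].
  unfold Rdiv. rewrite Rmult_assoc, Rinv_l by lra. lra.
Qed.


Lemma L_seq V w0 ws : gen_seq w0 V ws -> (0 < Z w0)%nat -> forall n,
  L (ws n) w0 = (rho (ws n) - rho w0) / (1 + rho (ws n)).
Proof. intros H Hz n. destruct (seq_cb V w0 ws H n) as [a Ha]. eapply L_formula; eauto. Qed.

Theorem mainTheorem8 (V : nat -> bool) (v : word) (vs : nat -> word) :
  inR V -> inF v -> V_built V v -> gen_seq v V vs ->
  (forall n : nat, (1 <= n)%nat ->
     L (vs n) v = (rho (vs n) - rho v) / (1 + rho (vs n))) /\
  exists l : R,
    LV_is V v l /\
    (inRstar V ->
       forall r : R, rhoV_is V (Fin r) ->
         l = (r - rho v) / (1 + r) /\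
         l = 1 - (1 + rho v) / (1 + r) /\
         0 < l < 1 /\
         (forall us : nat -> word, gen_seq [false] V us ->
            exists ls : nat -> R,
              (forall n, LV_is V (us n) (ls n)) /\
              (forall n, ls (S n) <= ls n) /\
              Un_cv ls 0)) /\
    (~ inRstar V -> l = 1).
Proof.
  intros HR Hv _ Hvs.
  assert (Zv : (0 < Z v)%nat).
  { destruct Hv as [Hne [Hhd _]]. destruct v as [|b v']; [congruence|].
    simpl in Hhd. subst b. unfold Z. simpl. lia. }
  assert (Zf : (0 < Z [false])%nat) by (unfold Z; simpl; lia).
  split.
  { intros n _. apply (L_seq V v vs Hvs Zv). }
  destruct HR as [Hap [us0 Hus0]].
  destruct (classic (inRstar V)) as [Hst|Hst].
  - pose proof Hst as [_ [r0 Hr0]].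
    pose proof (Hr0 us0 Hus0) as Hc0. simpl in Hc0.
    assert (Hr0p : 0 <= r0).
    { eapply Rle_trans; [apply (rho_nonneg (us0 0%nat))|].
      apply (mono_le_lim (fun n => rho (us0 n))); auto. apply (rho_mono V [false]); auto. }
    assert (Hrv : 0 <= rho v) by apply rho_nonneg.
    exists ((r0 - rho v) / (1 + r0)). split; [|split].
    + split; [eauto|]. intros ws Hws.
      apply Un_cv_ext with (fun n => (rho (ws n) - rho v) / (1 + rho (ws n))).
      { intro n. symmetry. apply (L_seq V v ws Hws Zv). }
      apply Lconv; auto. { intro; apply rho_nonneg. }
      exact (same_lim V v ws [false] us0 r0 Hws Zv Hus0 Zf Hc0).
    + intros _ r Hr. pose proof (Hr us0 Hus0) as Hc. simpl in Hc.
      assert (r = r0) by (eapply UL_sequence; eauto). subst r.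
      split; [auto|]. split; [field; lra|]. split.
      * destruct (strict_incr V v vs Hvs Zv Hap) as [n Hn].
        assert (rho (vs n) <= r0).
        { apply (mono_le_lim (fun n => rho (vs n))); [apply (rho_mono V v); auto|].
          exact (same_lim V v vs [false] us0 r0 Hvs Zv Hus0 Zf Hc0). }
        split.
        -- apply Rdiv_lt_0_compat; lra.
        -- apply Rmult_lt_reg_r with (1 + r0); [lra|].
           unfold Rdiv. rewrite Rmult_assoc, Rinv_l by lra. lra.
      * intros us Hus. pose proof (Hr0 us Hus) as Hcu. simpl in Hcu.
        assert (Zu : forall n, (0 < Z (us n))%nat) by (apply (seq_Z V [false]); auto).
        exists (fun n => (r0 - rho (us n)) / (1 + r0)). split; [|split].
        -- intro n. split.
           ++ exists (fun k => us (n + k)%nat). exact (gseq_shift V [false] us n Hus).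
           ++ intros ws Hws.
              apply Un_cv_ext with (fun k => (rho (ws k) - rho (us n)) / (1 + rho (ws k))).
              { intro k. symmetry. apply (L_seq V (us n) ws Hws (Zu n)). }
              apply Lconv; auto. { intro; apply rho_nonneg. } { apply rho_nonneg. }
              exact (same_lim V (us n) ws [false] us r0 Hws (Zu n) Hus Zf Hcu).
        -- intro n. unfold Rdiv. apply Rmult_le_compat_r.
           { left; apply Rinv_0_lt_compat; lra. }
           pose proof (rho_mono V [false] us Hus Zf n). lra.
        -- intros eps Heps. destruct (Hcu eps Heps) as [N HN]. exists N. intros n Hn.
           specialize (HN n Hn). unfold Rdist in *.
           rewrite Rminus_0_r.
           replace ((r0 - rho (us n)) / (1 + r0)) with (- (rho (us n) - r0) * / (1 + r0)) by (field; lra).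
           rewrite Rabs_mult, Rabs_Ropp, (Rabs_right (/ (1 + r0))) by (left; apply Rinv_0_lt_compat; lra).
           assert (/ (1 + r0) <= 1).
           { rewrite <- Rinv_1. apply Rinv_le_contravar; lra. }
           pose proof (Rabs_pos (rho (us n) - r0)). nra.
    + intro; contradiction.
  - exists 1. split; [|split; [intros; contradiction|auto]].
    split; [eauto|]. intros ws Hws.
    apply Un_cv_ext with (fun n => (rho (ws n) - rho v) / (1 + rho (ws n))).
    { intro n. symmetry. apply (L_seq V v ws Hws Zv). }
    apply Linf. { intro; apply rho_nonneg. } { apply rho_nonneg. }
    apply NNPP. intro Hni. apply Hst.
    assert (HM : exists M, forall n, rho (ws n) <= M).
    { apply NNPP. intro HnM. apply Hni. intro M.
      apply NNPP. intro HN. apply HnM. exists M. intro n.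
      apply Rnot_lt_le. intro Hlt. apply HN. exists n. intros m Hm.
      eapply Rlt_le_trans; [exact Hlt|]. apply (rho_mono_le V v ws Hws Zv); auto. }
    destruct HM as [M HM].
    destruct (growing_cv (fun n => rho (ws n))) as [r1 Hr1].
    { intro n. apply (rho_mono V v ws Hws Zv). }
    { exists M. intros x [n ->]. apply HM. }
    split; [split; eauto|]. exists r1. intros us Hus. simpl.
    exact (same_lim V [false] us v ws r1 Hus Zf Hws Zv Hr1).
Qed.
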